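(* Let $p\geqslant 5$ be a prime and \[ \varpi_p = \psi\left( \frac{1}{p} \right) + 2p-1 + \gamma + p\left( \log p - \sum_{j=1}^{p} \frac{1}{j} \right). \] Then $(p-1)(1-\gamma)-\log 2-1< \varpi_p < (p-1)(1-\gamma)$.
   Context: $\psi=\Gamma'/\Gamma$ is the digamma function and $\gamma$ the Euler–Mascheroni constant. *)

(* Defs.v *)
From Stdlib Require Import Reals ZArith Znumtheory.
From Coquelicot Require Import Coquelicot.
Open Scope R_scope.

Definition harmonic (n : nat) : R := sum_n_m (fun j => / INR j) 1 n.

Definition euler_gamma : R :=
  real (Lim_seq (fun n => harmonic n - ln (INR n))).

Definition Gamma (x : R) : R :=
  RInt_gen (fun t => Rpower t (x - 1) * exp (- t))
           (at_right 0) (Rbar_locally p_infty).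

Definition digamma (x : R) : R := Derive Gamma x / Gamma x.

Definition varpi (p : nat) : R :=
  digamma (/ INR p) + 2 * INR p - 1 + euler_gamma
  + INR p * (ln (INR p) - harmonic p).

(* Main.v *)
Require Import Defs.
From Stdlib Require Import Reals ZArith Znumtheory Lra Lia Classical.
From Coquelicot Require Import Coquelicot.
Open Scope R_scope.

Notation Fa := (at_right 0).
Notation Fb := (Rbar_locally p_infty).

Definition EV (P : R -> R -> Prop) :=
  exists d, 0 < d /\ exists B, forall a b, 0 < a < d -> B < b -> P a b.

Lemma ball_R (x e y : R) : ball x e y <-> Rabs (y - x) < e.
Proof. reflexivity. Qed.

Lemma EV_F (P : R -> R -> Prop) : EV P -> filter_prod Fa Fb (fun ab => P (fst ab) (snd ab)).
Proof.
  intros [d [Hd [B HB]]].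
  apply (Filter_prod Fa Fb _ (fun a => 0 < a < d) (fun b => B < b)).
  - exists (mkposreal d Hd). intros y Hy Hy0. change (Rabs (y - 0) < d) in Hy.
    split; [lra|]. rewrite Rminus_0_r, Rabs_pos_eq in Hy; lra.
  - exists B. auto.
  - intros x y Hx Hy. simpl. auto.
Qed.

Lemma F_EV (Q : R * R -> Prop) : filter_prod Fa Fb Q -> EV (fun a b => Q (a, b)).
Proof.
  intros [Qa Qb [e He] [M HM] H].
  exists e. split; [apply cond_pos|]. exists M. intros a b Ha Hb.
  apply H; [|apply HM; auto]. apply He; [|lra]. change (Rabs (a - 0) < e).
  rewrite Rminus_0_r, Rabs_pos_eq; lra.
Qed.

Lemma EV_and (P Q : R -> R -> Prop) : EV P -> EV Q -> EV (fun a b => P a b /\ Q a b).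
Proof.
  intros [d1 [H1 [B1 HB1]]] [d2 [H2 [B2 HB2]]].
  exists (Rmin d1 d2). split. apply Rmin_pos; auto.
  exists (Rmax B1 B2). intros a b Ha Hb.
  pose proof (Rmin_l d1 d2); pose proof (Rmin_r d1 d2);
  pose proof (Rmax_l B1 B2); pose proof (Rmax_r B1 B2).
  split; [apply HB1|apply HB2]; lra.
Qed.

Lemma EV_ex (P : R -> R -> Prop) : EV P -> exists a b, P a b.
Proof.
  intros [d [H1 [B HB]]]. exists (d/2), (Rabs B + 1). apply HB. lra.
  pose proof (Rle_abs B); lra.
Qed.

Lemma EV_impl (P Q : R -> R -> Prop) : EV P -> (forall a b, P a b -> Q a b) -> EV Q.
Proof.
  intros [d [H1 [B HB]]] H. exists d; split; auto. exists B; auto.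
Qed.

Lemma EV_small (P : R -> R -> Prop) d B :
  0 < d -> (forall a b, 0 < a < d -> B < b -> P a b) -> EV P.
Proof. intros. exists d; split; auto. exists B; auto. Qed.

Lemma gen_ball (f : R -> R) l e : 0 < e -> is_RInt_gen f Fa Fb l ->
  EV (fun a b => exists y, is_RInt f a b y /\ Rabs (y - l) < e).
Proof.
  intros He H.
  assert (Hl := H (ball l (mkposreal e He)) (locally_ball l _)).
  unfold filtermapi in Hl. apply F_EV in Hl.
  eapply EV_impl; [exact Hl|]. intros a b [y [Hy1 Hy2]]. exists y; split; auto.
Qed.

Lemma gen_lin2 (f1 f0 : R -> R) l1 l0 c1 c M :
  is_RInt_gen f1 Fa Fb l1 -> is_RInt_gen f0 Fa Fb l0 ->
  EV (fun a b => c1 * RInt f1 a b + c * RInt f0 a b <= M) -> c1 * l1 + c * l0 <= M.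
Proof.
  intros H1 H0 HM.
  destruct (Rle_or_lt (c1 * l1 + c * l0) M) as [|Hlt]; auto. exfalso.
  set (e := c1 * l1 + c * l0 - M).
  assert (He : 0 < e) by (unfold e; lra).
  assert (Hc : 0 < Rabs c + 1) by (pose proof (Rabs_pos c); lra).
  assert (Hc1 : 0 < Rabs c1 + 1) by (pose proof (Rabs_pos c1); lra).
  assert (E1 := gen_ball f1 l1 (e/4/(Rabs c1 + 1)) ltac:(apply Rdiv_lt_0_compat; lra) H1).
  assert (E0 := gen_ball f0 l0 (e/4/(Rabs c + 1)) ltac:(apply Rdiv_lt_0_compat; lra) H0).
  destruct (EV_ex _ (EV_and _ _ (EV_and _ _ E1 E0) HM)) as [a [b [[[y1 [Hy1 Hb1]] [y0 [Hy0 Hb0]]] HR]]].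
  rewrite (is_RInt_unique _ _ _ _ Hy1), (is_RInt_unique _ _ _ _ Hy0) in HR.
  assert (K : forall c z l, 0 < Rabs c + 1 -> Rabs (z - l) < e/4/(Rabs c + 1) -> Rabs (c * (z - l)) <= e / 4).
  { intros c' z l Hc' Hz. rewrite Rabs_mult.
    apply Rle_trans with (Rabs c' * (e/4/(Rabs c' + 1))).
    apply Rmult_le_compat_l; [apply Rabs_pos|lra].
    apply Rle_trans with ((Rabs c' + 1) * (e/4/(Rabs c' + 1))).
    apply Rmult_le_compat_r; [apply Rlt_le, Rdiv_lt_0_compat; lra| lra].
    right; field; lra. }
  pose proof (K c y0 l0 Hc Hb0) as K1. pose proof (K c1 y1 l1 Hc1 Hb1) as K2.
  pose proof (Rle_abs (-(c*(y0 - l0)))) as K3. rewrite Rabs_Ropp in K3.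
  pose proof (Rle_abs (-(c1*(y1 - l1)))) as K4. rewrite Rabs_Ropp in K4.
  unfold e in *. lra.
Qed.

Lemma gen_lin (f1 f0 : R -> R) l1 l0 c M :
  is_RInt_gen f1 Fa Fb l1 -> is_RInt_gen f0 Fa Fb l0 ->
  EV (fun a b => RInt f1 a b + c * RInt f0 a b <= M) -> l1 + c * l0 <= M.
Proof.
  intros H1 H0 HM. replace l1 with (1 * l1) by ring. apply (gen_lin2 f1 f0); auto.
  eapply EV_impl; [exact HM|]. intros; lra.
Qed.

Lemma gen_le (f : R -> R) l M :
  is_RInt_gen f Fa Fb l -> EV (fun a b => RInt f a b <= M) -> l <= M.
Proof.
  intros H HM. replace l with (l + 0 * l) by ring.
  apply (gen_lin f f); auto. eapply EV_impl; [exact HM|]. intros; lra.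
Qed.

Lemma gen_ge (f : R -> R) l M :
  is_RInt_gen f Fa Fb l -> EV (fun a b => M <= RInt f a b) -> M <= l.
Proof.
  intros H HM. enough (l + (-2) * l <= - M) by lra.
  apply (gen_lin f f); auto. eapply EV_impl; [exact HM|]. intros; lra.
Qed.

Definition Cpos (f : R -> R) := forall t, 0 < t -> continuous f t.

Lemma exR (f : R -> R) a b : Cpos f -> 0 < a -> 0 < b -> ex_RInt f a b.
Proof.
  intros Hf Ha Hb. apply (@ex_RInt_continuous R_CompleteNormedModule). intros z [Hz _]. apply Hf.
  pose proof (Rmin_glb_lt a b 0 Ha Hb). lra.
Qed.

Lemma Chasles3 (f : R -> R) a b c : Cpos f -> 0 < a -> 0 < b -> 0 < c ->
  RInt f a c = RInt f a b + RInt f b c.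
Proof.
  intros. rewrite <- (RInt_Chasles f a b c); try apply exR; auto.
Qed.

Lemma GL (f : R -> R) M : Cpos f -> (forall t, 0 < t -> 0 <= f t) ->
  (forall a b, 0 < a -> a <= b -> RInt f a b <= M) ->
  exists l, is_RInt_gen f Fa Fb l.
Proof.
  intros Hc Hp HM.
  set (E := fun r => exists a b, 0 < a /\ a <= b /\ r = RInt f a b).
  assert (HB : bound E).
  { exists M. intros r [a [b [H1 [H2 H3]]]]. subst r. apply HM; auto. }
  assert (HE : exists r, E r).
  { exists (RInt f 1 1). exists 1, 1. repeat split; lra. }
  destruct (completeness E HB HE) as [S [HS1 HS2]].
  exists S. intros P [eps HP].
  unfold filtermapi.
  destruct (classic (exists r, E r /\ S - eps < r)) as [[r0 [[a0 [b0 [Ha0 [Hab0 Hr0]]]] Hlt]]|Hn].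
  2:{ exfalso. assert (S <= S - eps). apply HS2. intros r Hr.
      destruct (Rle_or_lt r (S - eps)); auto. exfalso; apply Hn; exists r; auto.
      pose proof (cond_pos eps); lra. }
  apply (EV_F (fun a b => exists y, is_RInt f a b y /\ P y)).
  apply (EV_small _ a0 b0); auto. intros a b Ha Hb.
  exists (RInt f a b). split. apply (@RInt_correct R_CompleteNormedModule), exR; auto; lra.
  apply HP. change (Rabs (RInt f a b - S) < eps).
  assert (RInt f a b <= S). { apply HS1. exists a, b. repeat split; lra. }
  assert (RInt f a b = RInt f a a0 + RInt f a0 b0 + RInt f b0 b).
  { rewrite (Chasles3 f a a0 b), (Chasles3 f a0 b0 b); try lra; auto. }
  assert (0 <= RInt f a a0). { apply RInt_ge_0. lra. apply exR; auto; lra. intros; apply Hp; lra. }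
  assert (0 <= RInt f b0 b). { apply RInt_ge_0. lra. apply exR; auto; lra. intros; apply Hp; lra. }
  rewrite Rabs_left1; lra.
Qed.

Lemma RInt_FTC (f df : R -> R) a b : a <= b ->
  (forall t, a <= t <= b -> is_derive f t (df t)) ->
  (forall t, a <= t <= b -> continuous df t) -> RInt df a b = f b - f a.
Proof.
  intros Hab Hd Hc.
  apply is_RInt_unique.
  apply (@is_RInt_derive R_CompleteNormedModule); intros t Ht;
  rewrite Rmin_left, Rmax_right in Ht; auto.
Qed.

Ltac contt := apply (@ex_derive_continuous R_AbsRing R_NormedModule); auto_derive; try lra.

Lemma exp_mono x y : x <= y -> exp x <= exp y.
Proof. intros [H|H]. left; apply exp_increasing; auto. subst; lra. Qed.

Lemma ln_mono x y : 0 < x -> x <= y -> ln x <= ln y.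
Proof. intros H [H1|H1]. left; apply ln_increasing; auto. subst; lra. Qed.

Lemma exp_le1 x : x <= 0 -> exp x <= 1.
Proof. intros. rewrite <- exp_0. apply exp_mono; auto. Qed.

Definition gi (y : R) := fun t => Rpower t (y - 1) * exp (- t).

Lemma gi_cont y : Cpos (gi y).
Proof. intros t Ht. unfold gi, Rpower. contt. Qed.

Lemma gi_pos y t : 0 <= gi y t.
Proof. unfold gi, Rpower. pose proof (exp_pos ((y-1) * ln t)); pose proof (exp_pos (-t)). nra. Qed.

Lemma exp_2ln t : 0 < t -> exp (2 * ln t) = t * t.
Proof. intros. replace (2 * ln t) with (ln t + ln t) by ring. rewrite exp_plus, exp_ln; auto. Qed.

Lemma gi_bound y a b : 0 < y <= 3 -> 0 < a -> a <= b -> RInt (gi y) a b <= 1 / y + 5.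
Proof.
  intros Hy Ha Hab.
  set (a' := Rmin a 1). set (b' := Rmax b 1).
  assert (Ha' : 0 < a') by (apply Rmin_pos; lra).
  assert (a' <= a) by apply Rmin_l. assert (a' <= 1) by apply Rmin_r.
  assert (b <= b') by apply Rmax_l. assert (1 <= b') by apply Rmax_r.
  assert (E1 : RInt (gi y) a' b' = RInt (gi y) a' a + RInt (gi y) a b + RInt (gi y) b b').
  { rewrite (Chasles3 _ a' a b'), (Chasles3 _ a b b'); try lra; apply gi_cont. }
  assert (0 <= RInt (gi y) a' a).
  { apply RInt_ge_0; auto. apply exR; auto; try lra; apply gi_cont. intros; apply gi_pos. }
  assert (0 <= RInt (gi y) b b').
  { apply RInt_ge_0; auto. apply exR; auto; try lra; apply gi_cont. intros; apply gi_pos. }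
  assert (E2 : RInt (gi y) a' b' = RInt (gi y) a' 1 + RInt (gi y) 1 b').
  { apply Chasles3; try lra; apply gi_cont. }
  assert (B1 : RInt (gi y) a' 1 <= 1 / y).
  { apply Rle_trans with (RInt (fun t => exp ((y - 1) * ln t)) a' 1).
    apply RInt_le; auto. apply exR; auto; try lra; apply gi_cont.
    apply exR; try lra. intros t Ht; contt.
    intros t Ht. unfold gi, Rpower.
    assert (exp (-t) <= 1). { rewrite <- exp_0. apply exp_mono. lra. }
    pose proof (exp_pos ((y - 1) * ln t)). nra.
    rewrite (RInt_FTC (fun t => exp (y * ln t) / y)); auto.
    - rewrite ln_1, Rmult_0_r, exp_0. pose proof (exp_pos (y * ln a')).
      assert (0 < exp (y * ln a') / y) by (apply Rdiv_lt_0_compat; lra). lra.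
    - intros t Ht. auto_derive. lra.
      replace ((y - 1) * ln t) with (y * ln t + - ln t) by ring.
      rewrite exp_plus, exp_Ropp, exp_ln; [|lra]. field. split; lra.
    - intros t Ht. contt. }
  assert (B2 : RInt (gi y) 1 b' <= 5).
  { apply Rle_trans with (RInt (fun t => t * t * exp (- t)) 1 b').
    apply RInt_le; auto. apply exR; auto; try lra; apply gi_cont.
    apply exR; try lra. intros t Ht; contt.
    intros t Ht. unfold gi, Rpower. rewrite <- exp_2ln; [|lra].
    apply Rmult_le_compat_r. apply Rlt_le, exp_pos.
    apply exp_mono. assert (0 <= ln t). { rewrite <- ln_1. apply ln_mono; lra. } nra.
    rewrite (RInt_FTC (fun t => - (t * t + 2 * t + 2) * exp (- t))); auto.
    - pose proof (exp_pos (- b')). pose proof (exp_pos (-(1))).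
      assert (exp (-(1)) <= 1) by (apply exp_le1; lra).
      nra.
    - intros t Ht. auto_derive. auto. ring.
    - intros t Ht. contt. }
  lra.
Qed.

Lemma Gam_is y : 0 < y <= 3 -> is_RInt_gen (gi y) Fa Fb (Gamma y).
Proof.
  intros Hy.
  destruct (GL (gi y) (1/y + 5) (gi_cont y) (fun t _ => gi_pos y t)
              (fun a b Ha Hab => gi_bound y a b Hy Ha Hab)) as [l Hl].
  replace (Gamma y) with l; auto.
  symmetry. unfold Gamma. apply is_RInt_gen_unique. exact Hl.
Qed.

Lemma RInt_lin (f g : R -> R) c a b : ex_RInt f a b -> ex_RInt g a b ->
  RInt (fun t => f t + c * g t) a b = RInt f a b + c * RInt g a b.
Proof.
  intros Hf Hg.
  assert (E1 := @RInt_plus R_CompleteNormedModule f (fun t => scal c (g t)) a b Hf (ex_RInt_scal _ _ _ c Hg)).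
  assert (E2 := @RInt_scal R_CompleteNormedModule g a b c Hg).
  etransitivity; [exact E1|]. exact (f_equal (Rplus (RInt f a b)) E2).
Qed.

Lemma exp_cube b : 0 < b -> (b / 3) * (b / 3) * (b / 3) <= exp b.
Proof.
  intros Hb. assert (E : exp b = exp (b/3) * exp (b/3) * exp (b/3)).
  { rewrite <- !exp_plus. f_equal. field. }
  rewrite E. pose proof (exp_ineq1_le (b/3)).
  assert (0 <= b/3) by lra.
  apply Rmult_le_compat; try nra.
Qed.

Lemma tail_small y b eps : 0 < y <= 2 -> 0 < eps -> Rmax 1 (27 / eps) < b ->
  exp (y * ln b) * exp (- b) <= eps.
Proof.
  intros Hy He Hb. pose proof (Rmax_l 1 (27/eps)). pose proof (Rmax_r 1 (27/eps)).
  assert (Hb1 : 1 < b) by lra.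
  assert (0 <= ln b) by (rewrite <- ln_1; apply ln_mono; lra).
  apply Rle_trans with (b * b * exp (- b)).
  apply Rmult_le_compat_r. apply Rlt_le, exp_pos. rewrite <- exp_2ln by lra.
  apply exp_mono. nra.
  pose proof (exp_cube b ltac:(lra)). pose proof (exp_pos b). pose proof (exp_pos (-b)).
  assert (HX : exp (-b) * exp b = 1) by (rewrite <- exp_plus; replace (-b + b) with 0 by ring; apply exp_0).
  assert (K1 : b * b * b * exp (-b) <= 27) by nra.
  assert (K2 : 27 < eps * b).
  { assert (H6 : 27 / eps * eps < b * eps) by (apply Rmult_lt_compat_r; lra).
    replace (27 / eps * eps) with 27 in H6 by (field; lra). lra. }
  nra.
Qed.

Lemma head_small y a eps : 0 < y -> 0 < eps -> 0 < a < exp (ln eps / y) ->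
  exp (y * ln a) <= eps.
Proof.
  intros Hy He Ha. rewrite <- (exp_ln eps) by auto. apply exp_mono.
  assert (ln a <= ln eps / y). { rewrite <- (ln_exp (ln eps / y)). apply ln_mono; lra. }
  apply Rmult_le_compat_l with (r := y) in H; [|lra].
  replace (y * (ln eps / y)) with (ln eps) in H by (field; lra). lra.
Qed.

Lemma Gam_rec y : 0 < y <= 2 -> Gamma (y + 1) = y * Gamma y.
Proof.
  intros Hy.
  pose proof (Gam_is (y + 1) ltac:(lra)) as H1.
  pose proof (Gam_is y ltac:(lra)) as H0.
  assert (key : forall a b, 0 < a -> a <= b ->
    RInt (gi (y + 1)) a b + (-y) * RInt (gi y) a b =
    exp (y * ln a) * exp (- a) - exp (y * ln b) * exp (- b)).
  { intros a b Ha Hab.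
    rewrite <- RInt_lin by (apply exR; auto; try lra; apply gi_cont).
    rewrite (RInt_FTC (fun t => - (exp (y * ln t) * exp (- t)))); auto.
    - ring.
    - intros t Ht. unfold gi, Rpower. auto_derive. lra.
      replace (y + 1 - 1) with y by ring.
      replace ((y - 1) * ln t) with (y * ln t + - ln t) by ring.
      rewrite exp_plus, (exp_Ropp (ln t)), exp_ln by lra. field. lra.
    - intros t Ht. unfold gi, Rpower. contt. }
  assert (Hev : forall eps, 0 < eps -> EV (fun a b =>
    -eps <= RInt (gi (y + 1)) a b + (-y) * RInt (gi y) a b <= eps)).
  { intros eps He. apply (EV_small _ (Rmin 1 (exp (ln eps / y))) (Rmax 1 (27 / eps))).
    apply Rmin_pos; [lra|apply exp_pos].
    intros a b Ha Hb. pose proof (Rmin_l 1 (exp (ln eps / y))). pose proof (Rmin_r 1 (exp (ln eps / y))).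
    pose proof (Rmax_l 1 (27/eps)).
    rewrite key by lra.
    pose proof (tail_small y b eps ltac:(lra) He Hb).
    pose proof (head_small y a eps ltac:(lra) He ltac:(lra)).
    pose proof (exp_pos (y * ln a)). pose proof (exp_pos (y * ln b)).
    pose proof (exp_pos (-a)). pose proof (exp_pos (-b)).
    assert (exp (-a) <= 1) by (apply exp_le1; lra).
    split; nra. }
  assert (Hb : forall eps, 0 < eps -> Rabs (Gamma (y+1) + (-y) * Gamma y) <= eps).
  { intros eps He. apply Rabs_le. split.
    - assert (-1 * Gamma (y+1) + y * Gamma y <= eps); [|lra].
      apply (gen_lin2 _ _ _ _ _ _ _ H1 H0). eapply EV_impl; [exact (Hev eps He)|].
      intros a b [K1 K2]. lra.
    - assert (1 * Gamma (y+1) + (-y) * Gamma y <= eps); [|lra].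
      apply (gen_lin2 _ _ _ _ _ _ _ H1 H0). eapply EV_impl; [exact (Hev eps He)|].
      intros a b [K1 K2]. lra. }
  destruct (Req_dec (Gamma (y+1) + (-y) * Gamma y) 0) as [E|E]; [lra|].
  exfalso. pose proof (Rabs_pos_lt _ E). specialize (Hb _ (ltac:(lra) : 0 < Rabs (Gamma (y+1) + (-y) * Gamma y) / 2)). lra.
Qed.

Lemma RInt_sc (g : R -> R) c a b : ex_RInt g a b ->
  RInt (fun t => c * g t) a b = c * RInt g a b.
Proof. intros Hg. exact (@RInt_scal R_CompleteNormedModule g a b c Hg). Qed.

Lemma mono_FTC (f df : R -> R) a b : a <= b ->
  (forall t, a <= t <= b -> is_derive f t (df t)) ->
  (forall t, a <= t <= b -> continuous df t) ->
  (forall t, a < t < b -> 0 <= df t) -> f a <= f b.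
Proof.
  intros Hab Hd Hc Hp.
  assert (0 <= RInt df a b).
  { apply RInt_ge_0; auto. apply (@ex_RInt_continuous R_CompleteNormedModule).
    intros z Hz; rewrite Rmin_left, Rmax_right in Hz; auto. }
  rewrite (RInt_FTC f df) in H; auto. lra.
Qed.

Lemma expm_upper t : 0 <= t -> exp (- t) <= 1 - t + t * t / 2.
Proof.
  intros Ht.
  assert (1 - 0 + 0 * 0 / 2 - exp (- 0) <= 1 - t + t * t / 2 - exp (- t)).
  { apply (mono_FTC (fun t => 1 - t + t * t / 2 - exp (- t)) (fun t => -1 + t + exp (- t))); auto.
    - intros s Hs. auto_derive; auto. field.
    - intros s Hs. contt.
    - intros s Hs. pose proof (exp_ineq1_le (- s)). lra. }
  rewrite Ropp_0, exp_0 in H. lra.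
Qed.

Lemma expm_lower t : 1 - t <= exp (- t).
Proof. pose proof (exp_ineq1_le (- t)). lra. Qed.

Lemma ln_le_sub1 r : 0 < r -> ln r <= r - 1.
Proof. intros. pose proof (exp_ineq1_le (ln r)). rewrite exp_ln in H0; lra. Qed.

Lemma exp1_big : 2.44 <= exp 1.
Proof.
  assert (E : exp 1 = exp (1/4) * exp (1/4) * exp (1/4) * exp (1/4)).
  { rewrite <- !exp_plus. f_equal. field. }
  rewrite E. pose proof (exp_ineq1_le (1/4)).
  assert (1.25 <= exp (1/4)) by lra.
  assert (1.25 * 1.25 <= exp (1/4) * exp (1/4)) by (apply Rmult_le_compat; lra).
  assert (1.25 * 1.25 * 1.25 <= exp (1/4) * exp (1/4) * exp (1/4)) by (apply Rmult_le_compat; lra).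
  assert (1.25 * 1.25 * 1.25 * 1.25 <= exp (1/4) * exp (1/4) * exp (1/4) * exp (1/4)) by (apply Rmult_le_compat; lra).
  lra.
Qed.

Lemma expm1_small : exp (- (1)) <= 0.41.
Proof.
  pose proof exp1_big. pose proof (exp_pos (-(1))).
  assert (exp (-(1)) * exp 1 = 1) by (rewrite <- exp_plus; replace (-(1) + 1) with 0 by ring; apply exp_0).
  nra.
Qed.

Definition LE := fun t => ln t * exp (- t).

Lemma LE_cont : Cpos LE.
Proof. intros t Ht. unfold LE. contt. Qed.

Lemma LE_lower a b : 0 < a < 1 -> 1 < b -> - (29 / 36) <= RInt LE a b.
Proof.
  intros Ha Hb.
  rewrite (Chasles3 _ a 1 b) by (try apply LE_cont; lra).
  assert (0 <= RInt LE 1 b).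
  { apply RInt_ge_0. lra. apply exR; try lra; apply LE_cont.
    intros t Ht. unfold LE. assert (0 <= ln t) by (rewrite <- ln_1; apply ln_mono; lra).
    pose proof (exp_pos (- t)). nra. }
  assert (RInt (fun t => ln t * (1 - t + t * t / 2)) a 1 <= RInt LE a 1).
  { apply RInt_le. lra. apply exR; try lra. intros t Ht; contt.
    apply exR; try lra; apply LE_cont.
    intros t Ht. unfold LE. assert (ln t <= 0) by (rewrite <- ln_1; apply ln_mono; lra).
    pose proof (expm_upper t ltac:(lra)). nra. }
  set (F := fun t => t * ln t - t - t * t * ln t / 2 + t * t / 4 + t * t * t * ln t / 6 - t * t * t / 18).
  rewrite (RInt_FTC F) in H0; try lra.
  - unfold F in H0. rewrite ln_1 in H0.
    assert (ln a <= 0) by (rewrite <- ln_1; apply ln_mono; lra).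
    assert (a * ln a * (1 - a / 2 + a * a / 6) <= 0).
    { assert (0 < 1 - a / 2 + a * a / 6) by nra. 
      assert (a * ln a <= 0) by nra. nra. }
    nra.
  - intros t Ht. unfold F. auto_derive. lra. field. lra.
  - intros t Ht. contt.
Qed.

Definition RLE := fun t => exp (ln t / 4) * ln t * exp (- t).

Lemma RLE_cont : Cpos RLE.
Proof. intros t Ht. unfold RLE. contt. Qed.

Lemma vexp v : 0 <= v -> v * exp (- v) <= 1.
Proof.
  intros Hv. pose proof (exp_ineq1_le v). pose proof (exp_pos (-v)).
  assert (exp (-v) * exp v = 1) by (rewrite <- exp_plus; replace (-v + v) with 0 by ring; apply exp_0).
  nra.
Qed.

Lemma RLE_upper a b : 0 < a < 1/400 -> 1 < b -> RInt RLE a b <= - (1 / 50).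
Proof.
  intros Ha Hb.
  rewrite (Chasles3 _ a 1 b) by (try apply RLE_cont; lra).
  assert (P1 : RInt RLE 1 b <= 0.41).
  { apply Rle_trans with (RInt (fun t => (t - 1) * exp (- t)) 1 b).
    apply RInt_le. lra. apply exR; try lra; apply RLE_cont. apply exR; try lra. intros t Ht; contt.
    intros t Ht. unfold RLE. apply Rmult_le_compat_r. apply Rlt_le, exp_pos.
    set (r := exp (ln t / 4)).
    assert (Er : r * r * r * r = t).
    { unfold r. rewrite <- !exp_plus. replace (ln t / 4 + ln t / 4 + ln t / 4 + ln t / 4) with (ln t) by field.
      apply exp_ln; lra. }
    assert (Hr1 : 1 <= r). { unfold r. rewrite <- exp_0. apply exp_mono.
      assert (0 <= ln t) by (rewrite <- ln_1; apply ln_mono; lra). lra. }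
    assert (El : ln t = 4 * ln r). { unfold r. rewrite ln_exp. field. }
    pose proof (ln_le_sub1 r ltac:(lra)).
    rewrite El, <- Er. assert (0 <= ln r) by (rewrite <- ln_1; apply ln_mono; lra).
    assert (r * (4 * ln r) <= 4 * r * (r - 1)) by nra.
    assert (4 * r * (r - 1) <= r * r * r * r - 1).
    { assert (0 <= (r - 1) * (r - 1) * (r * r + 2 * r - 1)).
      { apply Rmult_le_pos. nra. nra. }
      nra. }
    lra.
    rewrite (RInt_FTC (fun t => - t * exp (- t))); try lra.
    - pose proof expm1_small. pose proof (exp_pos (- b)). nra.
    - intros t Ht. auto_derive; auto. ring.
    - intros t Ht. contt. }
  assert (P2 : RInt RLE a 1 <= - (16 / 25) + 16 / 81 + 4 * a).
  { apply Rle_trans with (RInt (fun t => exp (ln t / 4) * ln t * (1 - t)) a 1).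
    apply RInt_le. lra. apply exR; try lra; apply RLE_cont. apply exR; try lra. intros t Ht; contt.
    intros t Ht. unfold RLE. 
    assert (ln t <= 0) by (rewrite <- ln_1; apply ln_mono; lra).
    pose proof (exp_pos (ln t / 4)). pose proof (expm_lower t).
    assert (exp (ln t / 4) * ln t <= 0) by nra. nra.
    set (H := fun t => t * exp (ln t / 4) * (4 * ln t / 5 - 16 / 25)
                       - t * t * exp (ln t / 4) * (4 * ln t / 9 - 16 / 81)).
    rewrite (RInt_FTC H); try lra.
    - unfold H. rewrite ln_1. replace (0 / 4) with 0 by field. rewrite exp_0.
      assert (La : ln a <= 0) by (rewrite <- ln_1; apply ln_mono; lra).
      set (r := exp (ln a / 4)).
      assert (Hr : 0 < r) by apply exp_pos.
      assert (Hr1 : r <= 1) by (apply exp_le1; lra).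
      assert (Hrl : r * (- ln a) <= 4).
      { unfold r. replace (ln a / 4) with (- (- ln a / 4)) by field.
        pose proof (vexp (- ln a / 4) ltac:(lra)). lra. }
      assert (a * a * r * (4 * ln a / 9 - 16 / 81) <= 0).
      { assert (0 < a * a * r) by (apply Rmult_lt_0_compat; nra). nra. }
      assert (a * r * (4 * ln a / 5 - 16 / 25) >= - (96/25) * a).
      { assert (r * (4 * ln a / 5 - 16 / 25) >= - (96/25)) by nra. nra. }
      lra.
    - intros t Ht. unfold H. auto_derive. lra. unfold Rdiv. field. lra.
    - intros t Ht. contt. }
  lra.
Qed.

Lemma gi1 y t : gi (y + 1) t = exp (y * ln t) * exp (- t).
Proof. unfold gi, Rpower. replace (y + 1 - 1) with y by ring. reflexivity. Qed.

Lemma G_up x : 0 < x <= 1/5 -> Gamma (x + 1) <= 2.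
Proof.
  intros Hx. apply (gen_le _ _ _ (Gam_is (x+1) ltac:(lra))).
  apply (EV_small _ 1 1); [lra|]. intros a b Ha Hb.
  apply Rle_trans with (RInt (fun t => (1 + t) * exp (- t)) a b).
  apply RInt_le. lra. apply exR; try lra; apply gi_cont. apply exR; try lra. intros t Ht; contt.
  intros t Ht. rewrite gi1. apply Rmult_le_compat_r. apply Rlt_le, exp_pos.
  destruct (Rle_or_lt t 1).
  - assert (ln t <= 0) by (rewrite <- ln_1; apply ln_mono; lra).
    assert (exp (x * ln t) <= 1) by (apply exp_le1; nra). lra.
  - assert (0 <= ln t) by (rewrite <- ln_1; apply ln_mono; lra).
    assert (exp (x * ln t) <= exp (ln t)) by (apply exp_mono; nra).
    rewrite exp_ln in H1; lra.
  - rewrite (RInt_FTC (fun t => - (t + 2) * exp (- t))); try lra.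
    + pose proof (exp_pos (-b)). pose proof (exp_ineq1_le a). pose proof (exp_pos (-a)).
      assert (exp (-a) * exp a = 1) by (rewrite <- exp_plus; replace (-a + a) with 0 by ring; apply exp_0).
      nra.
    + intros t Ht. auto_derive; auto. ring.
    + intros t Ht. contt.
Qed.

Lemma G_lo x : 0 < x <= 1/5 -> 4/5 <= Gamma (x + 1).
Proof.
  intros Hx. apply (gen_ge _ _ _ (Gam_is (x+1) ltac:(lra))).
  apply (EV_small _ (1/100) 100); [lra|]. intros a b Ha Hb.
  apply Rle_trans with (RInt (fun t => exp (- t) + x * LE t) a b).
  2:{ apply RInt_le. lra. apply exR; try lra. intros t Ht; unfold LE; contt.
      apply exR; try lra; apply gi_cont.
      intros t Ht. rewrite gi1. unfold LE. pose proof (exp_ineq1_le (x * ln t)).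
      pose proof (exp_pos (-t)). nra. }
  rewrite RInt_lin. 2:{ apply exR; try lra. intros t Ht; contt. } 2:{ apply exR; try lra; apply LE_cont. }
  pose proof (LE_lower a b ltac:(lra) ltac:(lra)).
  rewrite (RInt_FTC (fun t => - exp (- t))); try lra.
  - pose proof (expm_lower a). pose proof (exp_pos (-b)). pose proof (exp_ineq1_le b).
    assert (exp (-b) * exp b = 1) by (rewrite <- exp_plus; replace (-b + b) with 0 by ring; apply exp_0).
    assert (exp (-b) <= 1/100) by nra.
    nra.
  - intros t Ht. auto_derive; auto. ring.
  - intros t Ht. contt.
Qed.

Lemma D_bounds x h : 0 < x <= 1/5 -> 0 < h -> x + h <= 1/4 ->
  - (29/36) * h <= Gamma (x + h + 1) + (-1) * Gamma (x + 1) <= - (1/50) * h.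
Proof.
  intros Hx Hh Hxh.
  pose proof (Gam_is (x+h+1) ltac:(lra)) as H1.
  pose proof (Gam_is (x+1) ltac:(lra)) as H0.
  assert (Ex : forall a b, 0 < a -> 0 < b ->
     RInt (gi (x + h + 1)) a b + (-1) * RInt (gi (x + 1)) a b =
     RInt (fun t => gi (x + h + 1) t + (-1) * gi (x + 1) t) a b).
  { intros a b Ha Hb. rewrite RInt_lin; auto; apply exR; auto; apply gi_cont. }
  split.
  - replace (Gamma (x + h + 1) + (-1) * Gamma (x + 1)) with (-(1) * (-1 * Gamma (x + h + 1) + 1 * Gamma (x + 1))) by ring.
    assert (-1 * Gamma (x + h + 1) + 1 * Gamma (x + 1) <= (29/36) * h); [|lra].
    apply (gen_lin2 _ _ _ _ _ _ _ H1 H0).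
    apply (EV_small _ (1/2) 2); [lra|]. intros a b Ha Hb.
    assert (- (29/36) * h <= RInt (gi (x + h + 1)) a b + (-1) * RInt (gi (x + 1)) a b); [|lra].
    rewrite Ex by lra.
    apply Rle_trans with (RInt (fun t => h * LE t) a b).
    + rewrite RInt_sc by (apply exR; try lra; apply LE_cont).
      pose proof (LE_lower a b ltac:(lra) ltac:(lra)). nra.
    + apply RInt_le. lra. apply exR; try lra. intros t Ht; unfold LE; contt.
      apply exR; try lra. intros t Ht; unfold gi, Rpower; contt.
      intros t Ht. rewrite !gi1. unfold LE.
      replace ((x + h) * ln t) with (x * ln t + h * ln t) by ring. rewrite exp_plus.
      pose proof (exp_ineq1_le (h * ln t)). pose proof (exp_pos (- t)).
      pose proof (exp_pos (x * ln t)).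
      assert (ln t * 1 <= exp (x * ln t) * ln t).
      { destruct (Rle_or_lt t 1).
        - assert (ln t <= 0) by (rewrite <- ln_1; apply ln_mono; lra).
          assert (exp (x * ln t) <= 1) by (apply exp_le1; nra). nra.
        - assert (0 <= ln t) by (rewrite <- ln_1; apply ln_mono; lra).
          assert (1 <= exp (x * ln t)) by (rewrite <- exp_0; apply exp_mono; nra). nra. }
      assert (h * ln t <= exp (x * ln t) * (exp (h * ln t) - 1)) by nra.
      nra.
  - apply (gen_lin _ _ _ _ _ _ H1 H0).
    apply (EV_small _ (1/400) 2); [lra|]. intros a b Ha Hb.
    rewrite Ex by lra.
    apply Rle_trans with (RInt (fun t => h * RLE t) a b).
    + apply RInt_le. lra. 
      apply exR; try lra. intros t Ht; unfold gi, Rpower; contt.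
      apply exR; try lra. intros t Ht; unfold RLE; contt.
      intros t Ht. rewrite !gi1. unfold RLE.
      replace ((x + h) * ln t) with (x * ln t + h * ln t) by ring. rewrite exp_plus.
      pose proof (exp_pos (- t)). pose proof (exp_pos (x * ln t)). pose proof (exp_pos (h * ln t)).
      assert (K : exp (h * ln t) - 1 <= h * ln t * exp (h * ln t)).
      { pose proof (exp_ineq1_le (- (h * ln t))).
        assert (exp (- (h * ln t)) * exp (h * ln t) = 1) by (rewrite <- exp_plus; replace (- (h * ln t) + h * ln t) with 0 by ring; apply exp_0).
        nra. }
      assert (K2 : exp (x * ln t) * exp (h * ln t) * ln t <= exp (ln t / 4) * ln t).
      { rewrite <- exp_plus. destruct (Rle_or_lt t 1).
        - assert (ln t <= 0) by (rewrite <- ln_1; apply ln_mono; lra).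
          assert (exp (ln t / 4) <= exp (x * ln t + h * ln t)) by (apply exp_mono; nra). nra.
        - assert (0 <= ln t) by (rewrite <- ln_1; apply ln_mono; lra).
          assert (exp (x * ln t + h * ln t) <= exp (ln t / 4)) by (apply exp_mono; nra). nra. }
      assert (exp (x * ln t) * (exp (h * ln t) - 1) <= h * (exp (ln t / 4) * ln t)).
      { apply Rle_trans with (exp (x * ln t) * (h * ln t * exp (h * ln t))).
        apply Rmult_le_compat_l; lra. nra. }
      nra.
    + rewrite RInt_sc by (apply exR; try lra; apply RLE_cont).
      pose proof (RLE_upper a b ltac:(lra) ltac:(lra)). nra.
Qed.

Lemma harmS n : (1 <= n)%nat -> harmonic (S n) = harmonic n + / INR (S n).
Proof. intros Hn. unfold harmonic. rewrite sum_n_Sm by lia. reflexivity. Qed.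

Lemma ln_lower y : 0 < y -> 1 - / y <= ln y.
Proof.
  intros Hy. pose proof (ln_le_sub1 (/ y) ltac:(apply Rinv_0_lt_compat; lra)).
  rewrite ln_Rinv in H by lra. lra.
Qed.

Lemma ln_upper y : 1 <= y -> ln y <= (y - / y) / 2.
Proof.
  intros Hy.
  assert ((1 - / 1) / 2 - ln 1 <= (y - / y) / 2 - ln y).
  { apply (mono_FTC (fun t => (t - / t) / 2 - ln t) (fun t => (t - 1) * (t - 1) / (2 * t * t))); auto.
    intros s Hs. auto_derive. lra. field. lra.
    intros s Hs. apply (@ex_derive_continuous R_AbsRing R_NormedModule). auto_derive. nra.
    intros s Hs. apply Rmult_le_pos. nra. apply Rlt_le, Rinv_0_lt_compat. nra. }
  rewrite ln_1, Rinv_1 in H. lra.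
Qed.

Definition bh n := harmonic n - ln (INR n).

Lemma lnS n : (1 <= n)%nat -> ln (INR (S n)) - ln (INR n) = ln (INR (S n) / INR n).
Proof.
  intros Hn. assert (1 <= INR n) by (apply (le_INR 1); auto).
  rewrite S_INR. unfold Rdiv. rewrite ln_mult, ln_Rinv; try lra.
  apply Rinv_0_lt_compat; lra.
Qed.

Lemma bh_dec n : (1 <= n)%nat -> bh (S n) <= bh n.
Proof.
  intros Hn. unfold bh. rewrite harmS by auto.
  assert (1 <= INR n) by (apply (le_INR 1); auto).
  pose proof (lnS n Hn). pose proof (ln_lower (INR (S n) / INR n)).
  rewrite S_INR in *.
  assert (/ (INR n + 1) <= 1 - / ((INR n + 1) / INR n)).
  { right. field. lra. }
  assert (0 < (INR n + 1) / INR n) by (apply Rdiv_lt_0_compat; lra).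
  specialize (H1 H3). lra.
Qed.

Lemma bh_inc n : (1 <= n)%nat -> bh n - / (2 * INR n) <= bh (S n) - / (2 * INR (S n)).
Proof.
  intros Hn. unfold bh. rewrite harmS by auto.
  assert (1 <= INR n) by (apply (le_INR 1); auto).
  pose proof (lnS n Hn). pose proof (ln_upper (INR (S n) / INR n)).
  rewrite S_INR in *.
  assert (1 <= (INR n + 1) / INR n).
  { apply (Rmult_le_reg_r (INR n)); [lra|]. unfold Rdiv. rewrite Rmult_assoc, Rinv_l; lra. }
  specialize (H1 H2).
  assert (((INR n + 1) / INR n - / ((INR n + 1) / INR n)) / 2 =
          / (2 * INR n) + / (2 * (INR n + 1))) by (field; lra).
  assert (/ (INR n + 1) - / (2 * (INR n + 1)) = / (2 * (INR n + 1))) by (field; lra).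
  lra.
Qed.

Lemma bh_bounds p k : (1 <= p)%nat ->
  bh (p + k) <= bh p /\ bh p - / (2 * INR p) <= bh (p + k).
Proof.
  intros Hp. assert (1 <= INR p) by (apply (le_INR 1); auto).
  assert (forall k, bh p - / (2 * INR p) <= bh (p + k) - / (2 * INR (p + k)) /\ bh (p + k) <= bh p).
  { induction k0.
    - rewrite Nat.add_0_r. lra.
    - replace (p + S k0)%nat with (S (p + k0)) by lia.
      pose proof (bh_dec (p + k0) ltac:(lia)). pose proof (bh_inc (p + k0) ltac:(lia)). lra. }
  destruct (H0 k). split; auto.
  assert (0 < / (2 * INR (p + k))).
  { apply Rinv_0_lt_compat. assert (1 <= INR (p + k)) by (apply (le_INR 1); lia). lra. }
  lra.
Qed.

Lemma gamma_bounds p : (1 <= p)%nat ->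
  bh p - / (2 * INR p) <= euler_gamma <= bh p.
Proof.
  intros Hp. unfold euler_gamma.
  assert (H1 : Rbar_le (Lim_seq (fun n => harmonic n - ln (INR n))) (Lim_seq (fun _ => bh p))).
  { apply Lim_seq_le_loc. exists p. intros n Hn.
    replace n with (p + (n - p))%nat by lia. apply (bh_bounds p (n - p) Hp). }
  assert (H2 : Rbar_le (Lim_seq (fun _ => bh p - / (2 * INR p))) (Lim_seq (fun n => harmonic n - ln (INR n)))).
  { apply Lim_seq_le_loc. exists p. intros n Hn.
    replace n with (p + (n - p))%nat by lia. apply (bh_bounds p (n - p) Hp). }
  rewrite Lim_seq_const in H1, H2.
  destruct (Lim_seq (fun n => harmonic n - ln (INR n))); simpl in *; try tauto.
Qed.

Lemma ln2_lower : 7 / 12 <= ln 2.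
Proof.
  replace 2 with ((4/3) * (3/2)) by field. rewrite ln_mult by lra.
  pose proof (ln_lower (4/3) ltac:(lra)). pose proof (ln_lower (3/2) ltac:(lra)).
  replace (/ (4/3)) with (3/4) in H by field. replace (/ (3/2)) with (2/3) in H0 by field. lra.
Qed.

Lemma div_le X Y C : 0 < Y -> X <= C * Y -> X / Y <= C.
Proof. intros HY H. unfold Rdiv. apply Rmult_le_reg_r with Y; auto.
  rewrite Rmult_assoc, Rinv_l by lra. lra. Qed.

Lemma div_ge X Y C : 0 < Y -> C * Y <= X -> C <= X / Y.
Proof. intros HY H. unfold Rdiv. apply Rmult_le_reg_r with Y; auto.
  rewrite Rmult_assoc, Rinv_l by lra. lra. Qed.

Lemma alg_bounds P G h Dp : 5 <= P -> 4/5 <= G <= 2 -> 0 < h -> h * P * P <= 1/200 ->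
  -(29/36) * h <= Dp <= -(1/50) * h ->
  -G*P*P - 29*P/36 <= ((G + Dp)/(/P + h) - G*P)/h <= -G*P*P - P/200.
Proof.
  intros HP HG Hh HhP HD.
  assert (E : ((G + Dp)/(/P + h) - G*P)/h = (P * (Dp - G*h*P)) / (h * (1 + h*P))).
  { field. repeat split; try lra. 
    apply Rgt_not_eq. nra. }

  rewrite E.
  assert (HY : 0 < h * (1 + h * P)) by nra.
  assert (HPh : P * h <= 1/200) by nra.
  assert (0 <= P * h) by nra.
  split.
  - apply div_ge; auto.
    assert (P * Dp >= - (29/36) * h * P) by nra.
    assert (0 <= G * P * P * h * h) by (repeat apply Rmult_le_pos; nra).
    assert (0 <= P * h * P * h) by nra.
    nra.
  - apply div_le; auto.
    assert (P * Dp <= - (1/50) * h * P) by nra.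
    assert (Hbr : 0 <= 3/200 - G * (h * P * P) - P * h / 200).
    { assert (G * (h * P * P) <= 2 * (1/200)) by (apply Rmult_le_compat; nra). nra. }
    assert (0 <= P * h * (3/200 - G * (h * P * P) - P * h / 200)) by (apply Rmult_le_pos; lra).
    nra.
Qed.

Lemma Derive_bounds p : (5 <= p)%nat ->
  - Gamma (/ INR p + 1) * INR p * INR p - 29 * INR p / 36 <= Derive Gamma (/ INR p) <=
  - Gamma (/ INR p + 1) * INR p * INR p - INR p / 200.
Proof.
  intros Hp.
  set (P := INR p). set (x := / P). set (G := Gamma (x + 1)).
  assert (HP : 5 <= P) by (unfold P; replace 5 with (INR 5) by (simpl; lra); apply le_INR; auto).
  assert (Hx : 0 < x <= 1/5).
  { unfold x. split. apply Rinv_0_lt_compat; lra.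
    apply (Rmult_le_reg_l P); [lra|]. rewrite Rinv_r by lra. lra. }
  assert (HxP : x * P = 1) by (unfold x; field; lra).
  pose proof (G_up x Hx). pose proof (G_lo x Hx).
  assert (EG : Gamma x = G * P).
  { pose proof (Gam_rec x ltac:(lra)). fold G in H1. rewrite H1.
    replace (x * Gamma x * P) with ((x * P) * Gamma x) by ring. rewrite HxP. ring. }
  set (L := - G * P * P - 29 * P / 36). set (U := - G * P * P - P / 200).
  assert (Hev : forall n, (200 * p * p <= n)%nat ->
     L <= (Gamma (x + / (INR n + 1)) - Gamma x) / (/ (INR n + 1)) <= U).
  { intros n Hn. set (h := / (INR n + 1)).
    assert (Hn' : 200 * P * P <= INR n).
    { assert (INR (200 * p * p) <= INR n) by (apply le_INR; lia).
      rewrite !mult_INR in H1. replace (INR 200) with 200 in H1 by (simpl; lra). unfold P. lra. }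
    assert (Hh : 0 < h) by (unfold h; apply Rinv_0_lt_compat; pose proof (pos_INR n); lra).
    assert (HhP : h * P * P <= 1/200).
    { pose proof (pos_INR n).
      replace (h * P * P) with ((P * P) / (INR n + 1)) by (unfold h; field; lra).
      apply div_le; lra. }
    assert (Hxh : x + h <= 1/4).
    { assert (25 <= P * P) by nra.
      assert (h * 25 <= h * (P * P)) by (apply Rmult_le_compat_l; lra).
      assert (h * (P * P) = h * P * P) by ring. lra. }
    pose proof (Gam_rec (x + h) ltac:(lra)) as R1.
    pose proof (D_bounds x h Hx Hh Hxh) as DB. fold G in DB.
    assert (E2 : Gamma (x + h) = (G + (Gamma (x + h + 1) + -1 * G)) / (/ P + h)).
    { rewrite R1. fold x. field. lra. }
    rewrite E2, EG.
    apply (alg_bounds P G h (Gamma (x + h + 1) + -1 * G)); auto; lra. }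
  unfold Derive, Lim.
  assert (H1 : Rbar_le (Lim_seq (fun _ => L)) (Lim_seq (fun n => (fun h => (Gamma (x + h) - Gamma x) / h) (Rbar_loc_seq 0 n)))).
  { apply Lim_seq_le_loc. exists (200 * p * p)%nat. intros n Hn. simpl.
    rewrite Rplus_0_l. apply (Hev n Hn). }
  assert (H2 : Rbar_le (Lim_seq (fun n => (fun h => (Gamma (x + h) - Gamma x) / h) (Rbar_loc_seq 0 n))) (Lim_seq (fun _ => U))).
  { apply Lim_seq_le_loc. exists (200 * p * p)%nat. intros n Hn. simpl.
    rewrite Rplus_0_l. apply (Hev n Hn). }
  rewrite Lim_seq_const in H1, H2.
  destruct (Lim_seq _); simpl in *; try tauto.
Qed.

Theorem lemma7p4 (p : nat) (Hp : prime (Z.of_nat p)) (H5 : (5 <= p)%nat) :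
  (INR p - 1) * (1 - euler_gamma) - ln 2 - 1 < varpi p /\
  varpi p < (INR p - 1) * (1 - euler_gamma).
Proof.
  pose proof (Derive_bounds p H5) as DB.
  set (P := INR p) in *. set (x := / P) in *. set (G := Gamma (x + 1)) in *.
  assert (HP : 5 <= P) by (unfold P; replace 5 with (INR 5) by (simpl; lra); apply le_INR; auto).
  assert (Hx : 0 < x <= 1/5).
  { unfold x. split. apply Rinv_0_lt_compat; lra.
    apply (Rmult_le_reg_l P); [lra|]. rewrite Rinv_r by lra. lra. }
  assert (HxP : x * P = 1) by (unfold x; field; lra).
  pose proof (G_up x Hx) as GU. pose proof (G_lo x Hx) as GL. fold G in GU, GL.
  assert (EG : Gamma x = G * P).
  { pose proof (Gam_rec x ltac:(lra)). fold G in H. rewrite H.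
    replace (x * Gamma x * P) with ((x * P) * Gamma x) by ring. rewrite HxP. ring. }
  set (s := digamma x + P).
  assert (Hs : - (29 / 36) / G <= s <= - (1/200) / G).
  { unfold s, digamma. rewrite EG.
    assert (0 < G * P) by nra.
    replace (- (29 / 36) / G) with ((- G * P * P - 29 * P / 36) / (G * P) + P) by (field; lra).
    replace (- (1/200) / G) with ((- G * P * P - P / 200) / (G * P) + P) by (field; lra).
    split; apply Rplus_le_compat_r; unfold Rdiv; apply Rmult_le_compat_r;
      try (apply Rlt_le, Rinv_0_lt_compat; lra); lra. }
  assert (Hs1 : s < 0).
  { assert (0 < (1/200) / G) by (apply Rdiv_lt_0_compat; lra). lra. }
  assert (Hs2 : - (29/36) * (5/4) <= s).
  { assert (- (29/36) * (5/4) <= - (29 / 36) / G); [|lra].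
    apply div_ge; [lra|]. nra. }
  pose proof (gamma_bounds p ltac:(lia)) as GB. fold P in GB.
  pose proof ln2_lower.
  assert (K1 : P * euler_gamma <= P * bh p) by (apply Rmult_le_compat_l; lra).
  assert (K2 : P * bh p - 1/2 <= P * euler_gamma).
  { assert (P * (bh p - / (2 * P)) <= P * euler_gamma) by (apply Rmult_le_compat_l; lra).
    replace (P * (bh p - / (2 * P))) with (P * bh p - 1/2) in H0 by (field; lra). lra. }
  assert (Ev : varpi p = s + P - 1 + euler_gamma - P * bh p).
  { unfold varpi, s, bh. fold P. fold x. ring. }
  rewrite Ev. split; nra.
Qed.
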